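(* Let $\phi_1,\dots,\phi_B\in\mathbb R^d$ with $\|\phi_i\|_2\le1$, and let $\eta>0$ with $\eta B<\frac13$. Let $H:=(I-\eta\phi_1\phi_1^\top)(I-\eta\phi_2\phi_2^\top)\cdots(I-\eta\phi_B\phi_B^\top)$. Then, in the positive semidefinite order, $$I-2\eta\Big(1+\frac{\eta B}{1-2\eta B}\Big)\sum_{i=1}^B\phi_i\phi_i^\top\;\preceq\;H^\top H\;\preceq\;I-2\eta\Big(1-\frac{\eta B}{1-2\eta B}\Big)\sum_{i=1}^B\phi_i\phi_i^\top .$$ *)

(* Defs.v *)
From mathcomp Require Import all_boot all_order all_algebra.
Set Implicit Arguments. Unset Strict Implicit. Unset Printing Implicit Defensive.
Import Order.TTheory GRing.Theory Num.Theory.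
Local Open Scope ring_scope.

Definition psd (R : realFieldType) (d : nat) (A : 'M[R]_d) : Prop :=
  forall x : 'cV[R]_d, 0 <= (x^T *m A *m x) 0 0.

Definition loewner_le (R : realFieldType) (d : nat) (A B : 'M[R]_d) : Prop :=
  psd (B - A).

Definition sqnorm (R : realFieldType) (d : nat) (v : 'cV[R]_d) : R :=
  \sum_(j < d) v j 0 ^+ 2.

Definition Hprod (R : realFieldType) (d B : nat) (eta : R) (phi : 'I_B -> 'cV[R]_d)
  : 'M[R]_d :=
  \big[mulmx/1%:M]_(i < B) (1%:M - eta *: (phi i *m (phi i)^T)).

Definition Ssum (R : realFieldType) (d B : nat) (phi : 'I_B -> 'cV[R]_d) : 'M[R]_d :=
  \sum_(i < B) phi i *m (phi i)^T.

(* Main.v *)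
Require Import Defs.
From mathcomp Require Import all_boot all_order all_algebra.
From mathcomp Require Import ring lra.
Import Order.TTheory GRing.Theory Num.Theory.
Set Implicit Arguments. Unset Strict Implicit. Unset Printing Implicit Defensive.
Local Open Scope ring_scope.

Definition dot (R : realFieldType) (d : nat) (u v : 'cV[R]_d) : R :=
  \sum_(j < d) u j 0 * v j 0.

Lemma dotC (R : realFieldType) d (u v : 'cV[R]_d) : dot u v = dot v u.
Proof. by apply: eq_bigr => j _; rewrite mulrC. Qed.

Lemma dotBZr (R : realFieldType) d (u y v : 'cV[R]_d) (k : R) :
  dot u (y - k *: v) = dot u y - k * dot u v.
Proof.
rewrite /dot mulr_sumr -sumrB; apply: eq_bigr => j _.
rewrite !mxE; ring.
Qed.

Lemma dotBZl (R : realFieldType) d (u y v : 'cV[R]_d) (k : R) :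
  dot (y - k *: v) u = dot y u - k * dot v u.
Proof. by rewrite dotC dotBZr (dotC u y) (dotC u v). Qed.

Lemma dot_ge0 (R : realFieldType) d (u : 'cV[R]_d) : 0 <= dot u u.
Proof. by apply: sumr_ge0 => j _; rewrite -expr2 sqr_ge0. Qed.

Lemma dot_sqnorm (R : realFieldType) d (u : 'cV[R]_d) : sqnorm u = dot u u.
Proof. by apply: eq_bigr => j _; rewrite expr2. Qed.

Lemma dot_abs_le (R : realFieldType) d (u v : 'cV[R]_d) :
  2 * `|dot u v| <= dot u u + dot v v.
Proof.
have h1 : dot u u + dot v v - 2 * dot u v = \sum_(j < d) (u j 0 - v j 0) ^+ 2.
  rewrite /dot mulr_sumr -big_split -sumrB /=; apply: eq_bigr => j _; ring.
have h2 : dot u u + dot v v + 2 * dot u v = \sum_(j < d) (u j 0 + v j 0) ^+ 2.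
  rewrite /dot mulr_sumr -!big_split /=; apply: eq_bigr => j _; ring.
have g1 : 0 <= \sum_(j < d) (u j 0 - v j 0) ^+ 2 by apply: sumr_ge0 => j _; apply: sqr_ge0.
have g2 : 0 <= \sum_(j < d) (u j 0 + v j 0) ^+ 2 by apply: sumr_ge0 => j _; apply: sqr_ge0.
case: (ler0P (dot u v)) => h; lra.
Qed.

Lemma dot_le1 (R : realFieldType) d (u v : 'cV[R]_d) :
  dot u u <= 1 -> dot v v <= 1 -> `|dot u v| <= 1.
Proof. move=> h1 h2; have := dot_abs_le u v; lra. Qed.

Fixpoint yv (R : realFieldType) d (eta : R) (x : 'cV[R]_d) (s : seq 'cV[R]_d) : 'cV[R]_d :=
  match s with
  | [::] => x
  | v :: s' => yv eta x s' - (eta * dot v (yv eta x s')) *: v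
  end.

Fixpoint SB (R : realFieldType) d (eta : R) (x : 'cV[R]_d) (s : seq 'cV[R]_d) : R :=
  match s with [::] => 0 | v :: s' => dot v (yv eta x s') ^+ 2 + SB eta x s' end.
Fixpoint TB (R : realFieldType) d (eta : R) (x : 'cV[R]_d) (s : seq 'cV[R]_d) : R :=
  match s with [::] => 0 | v :: s' => `|dot v (yv eta x s')| + TB eta x s' end.
Fixpoint CB (R : realFieldType) d (eta : R) (x : 'cV[R]_d) (s : seq 'cV[R]_d) : R :=
  match s with [::] => 0 | v :: s' => `|dot v (yv eta x s')| * TB eta x s' + CB eta x s' end.
Fixpoint E2 (R : realFieldType) d (eta : R) (x : 'cV[R]_d) (s : seq 'cV[R]_d) : R :=
  match s with [::] => 0 | v :: s' => TB eta x s' ^+ 2 + E2 eta x s' end.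
Fixpoint WS (R : realFieldType) d (eta : R) (x : 'cV[R]_d) (s : seq 'cV[R]_d) : R :=
  match s with [::] => 0 | v :: s' =>
    (2 * eta - eta ^+ 2 * dot v v) * dot v (yv eta x s') ^+ 2 + WS eta x s' end.
Fixpoint SA (R : realFieldType) d (x : 'cV[R]_d) (s : seq 'cV[R]_d) : R :=
  match s with [::] => 0 | v :: s' => dot v x ^+ 2 + SA x s' end.

Definition okl (R : realFieldType) d (s : seq 'cV[R]_d) := forall v, v \in s -> dot v v <= 1.

Lemma okl_cons (R : realFieldType) d (v : 'cV[R]_d) s : okl (v :: s) -> dot v v <= 1 /\ okl s.
Proof.
move=> h; split; first by apply: h; rewrite inE eqxx.
by move=> u hu; apply: h; rewrite inE hu orbT.
Qed.

Lemma SB_ge0 (R : realFieldType) d (eta : R) x (s : seq 'cV[R]_d) : 0 <= SB eta x s.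
Proof. elim: s => [|v s IH] /=; first by []. by rewrite addr_ge0 // sqr_ge0. Qed.
Lemma TB_ge0 (R : realFieldType) d (eta : R) x (s : seq 'cV[R]_d) : 0 <= TB eta x s.
Proof. elim: s => [|v s IH] /=; first by []. by rewrite addr_ge0. Qed.

Lemma WS_id (R : realFieldType) d (eta : R) x (s : seq 'cV[R]_d) :
  dot x x - dot (yv eta x s) (yv eta x s) = WS eta x s.
Proof.
elim: s => [|v s IH] /=; first by rewrite subrr.
rewrite dotBZl !dotBZr (dotC (yv eta x s) v) -IH; ring.
Qed.

Lemma WS_bounds (R : realFieldType) d (eta : R) x (s : seq 'cV[R]_d) :
  0 <= eta -> okl s ->
  (2 * eta - eta ^+ 2) * SB eta x s <= WS eta x s <= 2 * eta * SB eta x s.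
Proof.
move=> he; elim: s => [|v s IH] /=; first by rewrite !mulr0 lexx.
case/okl_cons=> hv /IH /andP[h1 h2].
have hv0 := dot_ge0 v.
have hb := sqr_ge0 (dot v (yv eta x s)).
set b2 := dot v (yv eta x s) ^+ 2 in hb *.
have e2 : 0 <= eta ^+ 2 by apply: sqr_ge0.
have k1 : eta ^+ 2 * dot v v * b2 <= eta ^+ 2 * b2.
  rewrite -mulrA; apply: ler_wpM2l => //.
  exact: ler_piMl.
have k2 : 0 <= eta ^+ 2 * dot v v * b2 by apply: mulr_ge0 => //; apply: mulr_ge0.
apply/andP; split; nra.
Qed.

Lemma e_bound (R : realFieldType) d (eta : R) x (s : seq 'cV[R]_d) (v : 'cV[R]_d) :
  0 <= eta -> okl s -> dot v v <= 1 ->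
  `|dot v x - dot v (yv eta x s)| <= eta * TB eta x s.
Proof.
move=> he; elim: s => [|u s IH] /=; first by rewrite subrr normr0 mulr0.
case/okl_cons=> hu /IH IH' hv; have {}IH := IH' hv.
rewrite dotBZr.
have -> : dot v x - (dot v (yv eta x s) - eta * dot u (yv eta x s) * dot v u)
  = (dot v x - dot v (yv eta x s)) + eta * (dot u (yv eta x s) * dot v u) by ring.
apply: (le_trans (ler_normD _ _)).
rewrite normrM (ger0_norm he) normrM mulrDr addrC lerD //.
apply: ler_wpM2l => //.
by rewrite -[leRHS]mulr1 ler_wpM2l // dot_le1.
Qed.

Lemma SA_bounds (R : realFieldType) d (eta : R) x (s : seq 'cV[R]_d) :
  0 <= eta -> okl s ->
  SB eta x s - 2 * eta * CB eta x s <= SA x s <=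
  SB eta x s + 2 * eta * CB eta x s + eta ^+ 2 * E2 eta x s.
Proof.
move=> he; elim: s => [|v s IH] /=; first by rewrite !mulr0 !addr0 subr0 lexx.
case/okl_cons=> hv /[dup] hs /IH /andP[h1 h2].
have he' := @e_bound _ _ eta x s v he hs hv.
set a := dot v x in he' *; set b := dot v (yv eta x s) in he' *.
set T := TB eta x s in he' *.
have -> : a = b + (a - b) by ring.
set e := a - b in he' *.
have hT : 0 <= T by apply: TB_ge0.
have hbe : `|b * e| <= eta * `|b| * T by rewrite normrM -mulrA mulrCA ler_wpM2l.
have he2 : e ^+ 2 <= eta ^+ 2 * T ^+ 2.
  rewrite -real_normK ?num_real // -exprMn; apply: lerXn2r; rewrite ?nnegrE //.
  by apply: mulr_ge0.
have := ler_norm (b * e); have := ler_norm (- (b*e)); rewrite normrN; move: hbe.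
set X := `|b * e|; set Y := eta * `|b| * T => hbe hN hP.
have ex : (b + e) ^+ 2 = b ^+ 2 + 2 * (b * e) + e ^+ 2 by ring.
have hY : 2 * eta * (`|b| * T + CB eta x s) = 2 * Y + 2 * eta * CB eta x s by rewrite /Y; ring.
have hE : eta ^+ 2 * (T ^+ 2 + E2 eta x s) = eta ^+ 2 * T ^+ 2 + eta ^+ 2 * E2 eta x s by ring.
rewrite ex hY hE.
clearbody X Y.
have e0 : 0 <= e ^+ 2 by apply: sqr_ge0.
move: X hbe hN hP => X hbe hN hP.
apply/andP; split; lra.
Qed.

Lemma cross_aux (R : realFieldType) d (eta : R) x (s : seq 'cV[R]_d) (p : R) :
  0 <= p -> 2 * p * TB eta x s <= (size s)%:R * p ^+ 2 + SB eta x s.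
Proof.
move=> hp; elim: s => [|v s IH] /=; first by rewrite !mulr0 mul0r addr0.
rewrite -natr1.
set b := dot v (yv eta x s).
have hb : 2 * p * `|b| <= p ^+ 2 + b ^+ 2.
  have := sqr_ge0 (p - `|b|); rewrite -[b ^+ 2]real_normK ?num_real //; nra.
nra.
Qed.

Lemma CB_bound (R : realFieldType) d (eta : R) x (s : seq 'cV[R]_d) :
  2 * CB eta x s + SB eta x s <= (size s)%:R * SB eta x s.
Proof.
elim: s => [|v s IH] /=; first by rewrite !mulr0 addr0.
rewrite -natr1.
set b := dot v (yv eta x s).
have := cross_aux eta x s (normr_ge0 b).
rewrite -[b ^+ 2]real_normK ?num_real //.
nra.
Qed.

Lemma TB_sq (R : realFieldType) d (eta : R) x (s : seq 'cV[R]_d) :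
  TB eta x s ^+ 2 <= (size s)%:R * SB eta x s.
Proof.
elim: s => [|v s IH] /=; first by rewrite expr0n mulr0.
rewrite -natr1.
set b := dot v (yv eta x s).
have := cross_aux eta x s (normr_ge0 b).
rewrite -[b ^+ 2]real_normK ?num_real //.
nra.
Qed.

Lemma E2_bound (R : realFieldType) d (eta : R) x (s : seq 'cV[R]_d) :
  E2 eta x s <= (size s)%:R ^+ 2 * SB eta x s.
Proof.
elim: s => [|v s IH] /=; first by rewrite mulr0.
rewrite -natr1.
set b := dot v (yv eta x s).
have h1 := TB_sq eta x s.
have h2 := SB_ge0 eta x s.
have h3 := sqr_ge0 b.
have h4 : 0 <= (size s)%:R :> R by apply: ler0n.
nra.
Qed.

Lemma dot_mx (R : realFieldType) d (u v : 'cV[R]_d) : (u^T *m v) 0 0 = dot u v.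
Proof. by rewrite mxE; apply: eq_bigr => j _; rewrite mxE. Qed.

Lemma rank1_mul (R : realFieldType) d (v y : 'cV[R]_d) :
  v *m (v^T *m y) = dot v y *: v.
Proof.
apply/matrixP => i j; rewrite !mxE big_ord1 (ord1 j) dot_mx mulrC; done.
Qed.

Lemma step_mul (R : realFieldType) d (eta : R) (v y : 'cV[R]_d) :
  (1%:M - eta *: (v *m v^T)) *m y = y - (eta * dot v y) *: v.
Proof.
by rewrite mulmxBl mul1mx -scalemxAl -mulmxA rank1_mul scalerA.
Qed.

Definition Hl (R : realFieldType) d (eta : R) (s : seq 'cV[R]_d) : 'M[R]_d :=
  foldr (fun v M => (1%:M - eta *: (v *m v^T)) *m M) 1%:M s.

Lemma Hl_mul (R : realFieldType) d (eta : R) (s : seq 'cV[R]_d) x :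
  Hl eta s *m x = yv eta x s.
Proof.
elim: s => [|v s IH] /=; first by rewrite mul1mx.
by rewrite -mulmxA IH step_mul.
Qed.

Lemma Hprod_Hl (R : realFieldType) d B (eta : R) (phi : 'I_B -> 'cV[R]_d) :
  Hprod eta phi = Hl eta (map phi (index_enum 'I_B)).
Proof.
rewrite /Hprod -(big_map phi xpredT (fun v => 1%:M - eta *: (v *m v^T))).
elim: (map _ _) => [|v s IH]; first by rewrite big_nil.
by rewrite big_cons IH.
Qed.

Lemma SA_sum (R : realFieldType) d (x : 'cV[R]_d) (s : seq 'cV[R]_d) :
  SA x s = \sum_(v <- s) dot v x ^+ 2.
Proof.
elim: s => [|v s IH] /=; first by rewrite big_nil.
by rewrite big_cons IH.
Qed.

Definition qf (R : realFieldType) d (M : 'M[R]_d) (x : 'cV[R]_d) : R := (x^T *m M *m x) 0 0.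

Lemma qfB (R : realFieldType) d (M N : 'M[R]_d) x : qf (M - N) x = qf M x - qf N x.
Proof. by rewrite /qf mulmxBr mulmxBl !mxE. Qed.

Lemma qfZ (R : realFieldType) d (M : 'M[R]_d) x k : qf (k *: M) x = k * qf M x.
Proof. by rewrite /qf -scalemxAr -scalemxAl !mxE. Qed.

Lemma qf1 (R : realFieldType) d (x : 'cV[R]_d) : qf 1%:M x = dot x x.
Proof. by rewrite /qf mulmx1 dot_mx. Qed.

Lemma qfHH (R : realFieldType) d (H : 'M[R]_d) x : qf (H^T *m H) x = dot (H *m x) (H *m x).
Proof. by rewrite /qf -dot_mx trmx_mul !mulmxA. Qed.

Lemma qfS (R : realFieldType) d B (phi : 'I_B -> 'cV[R]_d) x :
  qf (Ssum phi) x = SA x (map phi (index_enum 'I_B)).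
Proof.
rewrite SA_sum big_map /qf /Ssum mulmx_sumr mulmx_suml summxE.
apply: eq_bigr => i _.
rewrite !mulmxA -(mulmxA _ _ x) [LHS]mxE big_ord1 !dot_mx dotC expr2 //.
Qed.

Lemma arith_lo (R : realFieldType) (eta n SA SB W CB : R) :
  0 < eta -> 0 <= n -> eta * n < 1 / 3 -> 0 <= SB ->
  W <= 2 * eta * SB -> SB - 2 * eta * CB <= SA -> 2 * CB + SB <= n * SB ->
  W <= 2 * eta * (1 + eta * n / (1 - 2 * eta * n)) * SA.
Proof.
move=> he hn ht hSB hW hA hC.
set t := eta * n.
have t0 : 0 <= t by apply: mulr_ge0 => //; apply: ltW.
set D := 1 - 2 * eta * n.
have hD : 0 < D by rewrite /D; lra.
set c := t / D.
have cD : c * D = t by rewrite /c mulfVK // gt_eqF.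
have c0 : 0 <= c by apply: divr_ge0 => //; apply: ltW.
have h1 : eta * (2 * CB) <= eta * ((n - 1) * SB).
  by apply: ler_wpM2l; [apply: ltW | lra].
have h2 : (1 - t) * SB <= SA.
  have : eta * ((n - 1) * SB) = t * SB - eta * SB by rewrite /t; ring.
  have := mulr_ge0 (ltW he) hSB; nra.
have h3 : 1 <= (1 + c) * (1 - t).
  have e : (1 + c) * (1 - t) - 1 - c * t = c * D - t by rewrite /D /t; ring.
  rewrite cD subrr in e; have := mulr_ge0 c0 t0; lra.
have h4 : 0 <= 2 * eta * (1 + c) by apply: mulr_ge0; [apply: mulr_ge0; lra | lra].
apply: (le_trans hW).
apply: (le_trans _ (ler_wpM2l h4 h2)).
have h5 : 0 <= 2 * eta * SB by apply: mulr_ge0 => //; apply: mulr_ge0; [lra|apply: ltW].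
have := ler_wpM2l h5 h3.
have -> : 2 * eta * (1 + c) * ((1 - t) * SB) = 2 * eta * SB * ((1 + c) * (1 - t)) by ring.
by rewrite mulr1.
Qed.

Lemma arith_hi (R : realFieldType) (eta n SA SB W CB E : R) :
  0 < eta -> 0 <= n -> eta * n < 1 / 3 -> (n = 0 \/ 1 <= n) -> 0 <= SB ->
  (2 * eta - eta ^+ 2) * SB <= W -> SA <= SB + 2 * eta * CB + eta ^+ 2 * E ->
  2 * CB + SB <= n * SB -> E <= n ^+ 2 * SB ->
  2 * eta * (1 - eta * n / (1 - 2 * eta * n)) * SA <= W.
Proof.
move=> he hn ht hn01 hSB hW hA hC hE.
set t := eta * n.
have t0 : 0 <= t by apply: mulr_ge0 => //; apply: ltW.
set D := 1 - 2 * eta * n.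
have hD : 0 < D by rewrite /D; lra.
set c := t / D.
have cD : c * D = t by rewrite /c mulfVK // gt_eqF.
set K := 1 + t - eta + t ^+ 2.
have h1 : eta * (2 * CB) <= eta * ((n - 1) * SB).
  by apply: ler_wpM2l; [apply: ltW | lra].
have h1' : eta ^+ 2 * E <= eta ^+ 2 * (n ^+ 2 * SB).
  by apply: ler_wpM2l => //; apply: sqr_ge0.
have h2 : SA <= K * SB.
  have : eta * ((n - 1) * SB) = t * SB - eta * SB by rewrite /t; ring.
  have : eta ^+ 2 * (n ^+ 2 * SB) = t ^+ 2 * SB by rewrite /t; ring.
  have : K * SB = SB + t * SB - eta * SB + t ^+ 2 * SB by rewrite /K; ring.
  lra.
have c1 : 0 <= 1 - c.
  have e : (1 - c) * D = D - t by rewrite mulrBl mul1r cD.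
  have : 0 < D - t by rewrite /D /t; lra.
  rewrite -e; nra.
have h3 : (1 - c) * K <= 1 - eta / 2.
  have e : ((1 - c) * K - (1 - eta / 2)) * D =
     - (eta / 2 - 2 * t * eta + 2 * t ^+ 2 + 3 * t ^+ 3).
    have -> : ((1 - c) * K - (1 - eta / 2)) * D = D * K - (c * D) * K - D * (1 - eta / 2) by ring.
    by rewrite cD /D /K /t; field.
  have : 0 <= eta / 2 - 2 * t * eta + 2 * t ^+ 2 + 3 * t ^+ 3.
    have -> : eta / 2 - 2 * t * eta + 2 * t ^+ 2 + 3 * t ^+ 3 =
       eta / 2 + 2 * (t * (t - eta)) + 3 * t ^+ 3 by ring.
    have : 0 <= t * (t - eta).
      case: hn01 => [hn0|h1n]; first by rewrite /t hn0 mulr0 mul0r.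
      apply: mulr_ge0 => //; rewrite subr_ge0 /t -[X in X <= _]mulr1; apply: ler_wpM2l => //; lra.
    have : 0 <= t ^+ 3 by apply: exprn_ge0.
    lra.
  move=> hp.
  have hq : ((1 - c) * K - (1 - eta / 2)) * D <= 0 by rewrite e oppr_le0.
  nra.
have h4 : 0 <= 2 * eta * (1 - c) by apply: mulr_ge0 => //; apply: mulr_ge0; lra.
apply: (le_trans (ler_wpM2l h4 h2)).
apply: (le_trans _ hW).
have -> : 2 * eta * (1 - c) * (K * SB) = (2 * eta) * ((1 - c) * K) * SB by ring.
apply: ler_wpM2r => //.
have -> : 2 * eta - eta ^+ 2 = 2 * eta * (1 - eta / 2) by field.
apply: ler_wpM2l => //; lra.
Qed.

Theorem mainTheorem4 (R : realFieldType) (d B : nat) (phi : 'I_B -> 'cV[R]_d)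
  (eta : R) (hphi : forall i, sqnorm (phi i) <= 1)
  (heta : 0 < eta) (hetaB : eta * B%:R < 1 / 3) :
  let H := Hprod eta phi in
  let c := eta * B%:R / (1 - 2 * eta * B%:R) in
  loewner_le (1%:M - (2 * eta * (1 + c)) *: Ssum phi) ((H^T) *m H) /\
  loewner_le ((H^T) *m H) (1%:M - (2 * eta * (1 - c)) *: Ssum phi).
Proof.
move=> H c.
set s := map phi (index_enum 'I_B).
have hs : okl s.
  by move=> v /mapP [i _ ->]; rewrite -dot_sqnorm.
have sz : size s = B by by rewrite size_map [index_enum _]unlock -enumT size_enum_ord.
have he0 : 0 <= eta by apply: ltW.
have hn : 0 <= B%:R :> R by apply: ler0n.
have hn01 : B%:R = 0 :> R \/ 1 <= B%:R :> R.
  by case: B {phi hphi hetaB H c s hs sz hn} => [|k]; [left | right; rewrite ler1n].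
split => x; rewrite -[X in 0 <= X]/(qf _ x);
  rewrite !qfB qfHH qf1 qfZ qfS /H Hprod_Hl Hl_mul -/s.
- have := WS_id eta x s.
  have := WS_bounds x he0 hs; case/andP => _ hW.
  have := SA_bounds x he0 hs; case/andP => hA _.
  have hC := CB_bound eta x s; rewrite sz in hC.
  have := arith_lo heta hn hetaB (SB_ge0 eta x s) hW hA hC.
  rewrite -/c; lra.
- have := WS_id eta x s.
  have := WS_bounds x he0 hs; case/andP => hW _.
  have := SA_bounds x he0 hs; case/andP => _ hA.
  have hC := CB_bound eta x s; rewrite sz in hC.
  have hE := E2_bound eta x s; rewrite sz in hE.
  have := arith_hi heta hn hetaB hn01 (SB_ge0 eta x s) hW hA hC hE.
  rewrite -/c; lra.
Qed.
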